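(* For every $\gamma\in F(L)$ and $x_0\in\{x,y\}$, one has $\partial_{x_0}(\gamma)\in L$.
   Context: $A=\mathbb{R}\langle x,y\rangle$; $L\subset A$ is the free Lie algebra on $x,y$. $\operatorname{tr}$ is the projection $A\to A/\operatorname{span}\{ab-ba\}$. $F(L)$ is the quotient of $L\otimes L$ by the span of $a\otimes b-b\otimes a$ and $a\otimes[b,c]-[a,b]\otimes c$, regarded as a subspace of $A/\operatorname{span}\{ab-ba\}$ via $a\otimes b\mapsto\operatorname{tr}(ab)$ (an injective map). For $x_0\in\{x,y\}$, $\partial_{x_0}:A/\operatorname{span}\{ab-ba\}\to A$ is given on cyclic words by $\operatorname{tr}(a_1\cdots a_n)\mapsto\sum_{i:\,a_i=x_0}a_{i+1}\cdots a_n\,a_1\cdots a_{i-1}$ ($a_k\in\{x,y\}$), extended linearly; $\partial_{x_0}(\gamma)$ means this map applied to the image of $\gamma$. *)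

(* Defs.v *)
From Stdlib Require Import Reals List.
Import ListNotations.
Open Scope R_scope.

Definition letter := bool.
Definition word := list letter.
Definition lx : letter := false.
Definition ly : letter := true.

(* Elements of the (completed) free algebra: coefficient functions on words.
   Genuine elements of A = R<x,y> are those with finite support (isPoly). *)
Definition A := word -> R.

Definition sumk (n : nat) (f : nat -> R) : R :=
  fold_right (fun k acc => f k + acc) 0 (List.seq 0 n).

Definition isPoly (a : A) : Prop :=
  exists n : nat, forall w : word, (n <= length w)%nat -> a w = 0.

Definition zeroA : A := fun _ => 0.
Definition addA (a b : A) : A := fun w => a w + b w.
Definition scaleA (r : R) (a : A) : A := fun w => r * a w.
Definition subA (a b : A) : A := addA a (scaleA (-1) b).
Definition mulA (a b : A) : A :=
  fun w => sumk (S (length w)) (fun k => a (firstn k w) * b (skipn k w)).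
Definition genA (l : letter) : A :=
  fun w => if list_eq_dec Bool.bool_dec w [l] then 1 else 0.
Definition bracket (a b : A) : A := subA (mulA a b) (mulA b a).

(* L : the free Lie algebra on x, y = Lie subalgebra of A generated by x, y *)
Inductive inL : A -> Prop :=
  | L_gen (l : letter) : inL (genA l)
  | L_add (a b : A) : inL a -> inL b -> inL (addA a b)
  | L_scale (r : R) (a : A) : inL a -> inL (scaleA r a)
  | L_bracket (a b : A) : inL a -> inL b -> inL (bracket a b).

(* span{ab - ba : a,b in A} (kernel of tr : A -> A/span{ab-ba}) *)
Inductive inComm : A -> Prop :=
  | C_comm (a b : A) : isPoly a -> isPoly b -> inComm (bracket a b)
  | C_add (a b : A) : inComm a -> inComm b -> inComm (addA a b)
  | C_scale (r : R) (a : A) : inComm a -> inComm (scaleA r a).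

(* tr a = tr b *)
Definition tr_eq (a b : A) : Prop := inComm (subA a b).

(* span{ a b : a, b in L } in A; its image under tr is F(L) (image of
   a (x) b |-> tr(ab)) *)
Inductive inLL : A -> Prop :=
  | LL_mul (a b : A) : inL a -> inL b -> inLL (mulA a b)
  | LL_add (a b : A) : inLL a -> inLL b -> inLL (addA a b)
  | LL_scale (r : R) (a : A) : inLL a -> inLL (scaleA r a).

Definition trInFL (g : A) : Prop := exists h : A, inLL h /\ tr_eq g h.

(* cyclic derivative, on words:
   tr(a_1...a_n) |-> sum_{i : a_i = x0} a_{i+1}...a_n a_1...a_{i-1}. *)
Definition cycder (x0 : letter) (a : A) : A :=
  fun v => sumk (S (length v)) (fun k => a (skipn k v ++ x0 :: firstn k v)).

(* Main.v *)
Require Import Defs.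
From Stdlib Require Import Reals List Lra FunctionalExtensionality Setoid Morphisms.
Import ListNotations.
Open Scope R_scope.

Fixpoint lsum {X} (l : list X) (f : X -> R) : R :=
  match l with [] => 0 | x :: l' => f x + lsum l' f end.

Lemma fold_lsum (l : list nat) f :
  fold_right (fun k acc => f k + acc) 0 l = lsum l f.
Proof. induction l; simpl; [reflexivity| now rewrite IHl]. Qed.

Lemma lsum_ext {X} (l : list X) f g : (forall x, f x = g x) -> lsum l f = lsum l g.
Proof. intros H; induction l; simpl; [reflexivity| now rewrite H, IHl]. Qed.

#[export] Instance lsum_proper {X} (l : list X) : Proper (pointwise_relation X eq ==> eq) (lsum l).
Proof. intros f g H; apply lsum_ext; exact H. Qed.

Lemma lsum_map {X Y} (l : list X) (h : X -> Y) f : lsum (map h l) f = lsum l (fun x => f (h x)).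
Proof. induction l; simpl; [reflexivity| now rewrite IHl]. Qed.

Lemma lsum_plus {X} (l : list X) f g : lsum l (fun x => f x + g x) = lsum l f + lsum l g.
Proof. induction l; simpl; [lra| rewrite IHl; lra]. Qed.

Lemma lsum_scale {X} (l : list X) r f : lsum l (fun x => r * f x) = r * lsum l f.
Proof. induction l; simpl; [lra| rewrite IHl; lra]. Qed.

Lemma lsum_zero {X} (l : list X) f : (forall x, f x = 0) -> lsum l f = 0.
Proof. intros H; induction l; simpl; [lra| rewrite H, IHl; lra]. Qed.

Lemma lsum_swap {X Y} (l1 : list X) (l2 : list Y) f :
  lsum l1 (fun x => lsum l2 (fun y => f x y)) = lsum l2 (fun y => lsum l1 (fun x => f x y)).
Proof.
  induction l1; simpl.
  - symmetry; apply lsum_zero; reflexivity.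
  - rewrite IHl1, <- lsum_plus; reflexivity.
Qed.

Lemma lsum_shift (n : nat) f : lsum (seq 1 n) f = lsum (seq 0 n) (fun k => f (S k)).
Proof. rewrite <- seq_shift, lsum_map; reflexivity. Qed.

Fixpoint splits (v : word) : list (word * word) :=
  match v with
  | [] => [([], [])]
  | c :: v' => ([], c :: v') :: map (fun st => (c :: fst st, snd st)) (splits v')
  end.

Lemma seq_splits (v : word) (F : word -> word -> R) :
  lsum (seq 0 (S (length v))) (fun k => F (firstn k v) (skipn k v))
  = lsum (splits v) (fun st => F (fst st) (snd st)).
Proof.
  revert F; induction v as [|c v IH]; intros F.
  - reflexivity.
  - change (seq 0 (S (length (c :: v)))) with (0%nat :: seq 1 (S (length v))).
    cbn [lsum]. rewrite lsum_shift. simpl splits. simpl lsum.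
    rewrite lsum_map. f_equal.
    exact (IH (fun s t => F (c :: s) t)).
Qed.

Lemma mulA_splits a b w : mulA a b w = lsum (splits w) (fun st => a (fst st) * b (snd st)).
Proof.
  unfold mulA, sumk. rewrite fold_lsum.
  exact (seq_splits w (fun s t => a s * b t)).
Qed.

Lemma cycder_splits x0 a v : cycder x0 a v = lsum (splits v) (fun st => a (snd st ++ x0 :: fst st)).
Proof.
  unfold cycder, sumk. rewrite fold_lsum.
  exact (seq_splits v (fun s t => a (t ++ x0 :: s))).
Qed.

Lemma split_assoc (v : word) (F : word -> word -> word -> R) :
  lsum (splits v) (fun st => lsum (splits (snd st)) (fun t => F (fst st) (fst t) (snd t)))
  = lsum (splits v) (fun st => lsum (splits (fst st)) (fun s => F (fst s) (snd s) (snd st))).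
Proof.
  revert F; induction v as [|c v IH]; intros F.
  - reflexivity.
  - simpl splits. simpl lsum. rewrite !lsum_map. simpl.
    setoid_rewrite lsum_map. rewrite lsum_plus.
    pose proof (IH (fun s t1 t2 => F (c :: s) t1 t2)) as E. simpl in *. unfold word, letter in *. lra.
Qed.

Lemma splits_app (x : word) c y (G : word * word -> R) :
  lsum (splits (x ++ c :: y)) G
  = lsum (splits x) (fun st => G (fst st, snd st ++ c :: y))
    + lsum (splits y) (fun st => G (x ++ c :: fst st, snd st)).
Proof.
  revert G; induction x as [|d x IH]; intros G.
  - simpl. rewrite lsum_map. unfold word, letter in *. lra.
  - simpl. rewrite !lsum_map. rewrite IH. simpl. unfold word, letter in *. lra.
Qed.

Definition Dop (x0 : letter) (a m : A) : A :=
  fun v => lsum (splits v) (fun pu => lsum (splits (snd pu))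
             (fun qr => a (snd qr ++ x0 :: fst pu) * m (fst qr))).

Lemma cycder_mul x0 a b v : cycder x0 (mulA a b) v = Dop x0 a b v + Dop x0 b a v.
Proof.
  assert (H2: lsum (splits v) (fun st => lsum (splits (fst st))
     (fun s => a (snd st ++ x0 :: fst s) * b (snd s))) = Dop x0 a b v).
  { unfold Dop. symmetry. exact (split_assoc v (fun p q r => a (r ++ x0 :: p) * b q)). }
  assert (H1: lsum (splits v) (fun st => lsum (splits (snd st))
     (fun t => a (fst t) * b (snd t ++ x0 :: fst st))) = Dop x0 b a v).
  { unfold Dop. apply lsum_ext; intro; apply lsum_ext; intro; ring. }
  rewrite cycder_splits.
  transitivity (lsum (splits v) (fun st =>
     lsum (splits (snd st)) (fun t => a (fst t) * b (snd t ++ x0 :: fst st))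
   + lsum (splits (fst st)) (fun s => a (snd st ++ x0 :: fst s) * b (snd s)))).
  { apply lsum_ext; intro st. rewrite mulA_splits, splits_app. reflexivity. }
  rewrite lsum_plus, H1, H2. ring.
Qed.

Lemma lsum_scale_r {X} (l : list X) r f : lsum l f * r = lsum l (fun x => f x * r).
Proof. induction l; simpl; [lra| rewrite <- IHl; lra]. Qed.

Lemma Dop_mul_r x0 a q m v :
  Dop x0 a (mulA q m) v =
  lsum (splits v) (fun s1 => lsum (splits (snd s1)) (fun s2 => lsum (splits (snd s2))
     (fun s3 => a (snd s3 ++ x0 :: fst s1) * (q (fst s2) * m (fst s3))))).
Proof.
  unfold Dop.
  transitivity (lsum (splits v) (fun s1 => lsum (splits (snd s1)) (fun s2 =>
     lsum (splits (fst s2)) (fun s3 => a (snd s2 ++ x0 :: fst s1) * (q (fst s3) * m (snd s3)))))).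
  { apply lsum_ext; intro s1; apply lsum_ext; intro s2.
    rewrite mulA_splits, <- lsum_scale. reflexivity. }
  apply lsum_ext; intro s1. symmetry.
  exact (split_assoc (snd s1) (fun Q1 Q2 R => a (R ++ x0 :: fst s1) * (q Q1 * m Q2))).
Qed.

Lemma Dop_mul_l x0 p q m v :
  Dop x0 (mulA p q) m v = Dop x0 p (mulA q m) v + Dop x0 q (mulA m p) v.
Proof.
  rewrite !Dop_mul_r.
  set (TA := lsum (splits v) (fun s1 => lsum (splits (snd s1)) (fun s2 =>
        lsum (splits (snd s2)) (fun s3 => p (fst s3) * q (snd s3 ++ x0 :: fst s1) * m (fst s2))))).
  set (TB := lsum (splits v) (fun s1 => lsum (splits (snd s1)) (fun s2 =>
        lsum (splits (fst s1)) (fun s3 => p (snd s2 ++ x0 :: fst s3) * q (snd s3) * m (fst s2))))).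
  assert (E : Dop x0 (mulA p q) m v = TA + TB).
  { unfold Dop, TA, TB. rewrite <- lsum_plus. apply lsum_ext; intro s1.
    rewrite <- lsum_plus. apply lsum_ext; intro s2.
    rewrite mulA_splits, splits_app, Rmult_plus_distr_r, !lsum_scale_r.
    f_equal; apply lsum_ext; intro s3; simpl; ring. }
  rewrite E. clear E.
  assert (EA : TA = lsum (splits v) (fun s1 => lsum (splits (snd s1)) (fun s2 => lsum (splits (snd s2))
     (fun s3 => q (snd s3 ++ x0 :: fst s1) * (m (fst s2) * p (fst s3)))))).
  { unfold TA. apply lsum_ext; intro s1; apply lsum_ext; intro s2; apply lsum_ext; intro s3. ring. }
  assert (EB : TB = lsum (splits v) (fun s1 => lsum (splits (snd s1)) (fun s2 => lsum (splits (snd s2))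
     (fun s3 => p (snd s3 ++ x0 :: fst s1) * (q (fst s2) * m (fst s3)))))).
  { unfold TB.
    transitivity (lsum (splits v) (fun s1 => lsum (splits (fst s1)) (fun s3 =>
        lsum (splits (snd s1)) (fun s2 => p (snd s2 ++ x0 :: fst s3) * q (snd s3) * m (fst s2))))).
    { apply lsum_ext; intro s1. apply lsum_swap. }
    transitivity (lsum (splits v) (fun s1 => lsum (splits (snd s1)) (fun s3 =>
        lsum (splits (snd s3)) (fun s2 => p (snd s2 ++ x0 :: fst s1) * q (fst s3) * m (fst s2))))).
    { symmetry. exact (split_assoc v (fun a1 a2 u => lsum (splits u)
         (fun s2 => p (snd s2 ++ x0 :: a1) * q a2 * m (fst s2)))). }
    apply lsum_ext; intro s1; apply lsum_ext; intro s2; apply lsum_ext; intro s3. ring. }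
  rewrite EA, EB. ring.
Qed.

Lemma Dop_addl x0 a b m v : Dop x0 (addA a b) m v = Dop x0 a m v + Dop x0 b m v.
Proof.
  unfold Dop. rewrite <- lsum_plus. apply lsum_ext; intro s1.
  rewrite <- lsum_plus. apply lsum_ext; intro s2. unfold addA. ring.
Qed.

Lemma Dop_scalel x0 r a m v : Dop x0 (scaleA r a) m v = r * Dop x0 a m v.
Proof.
  unfold Dop. rewrite <- lsum_scale. apply lsum_ext; intro s1.
  rewrite <- lsum_scale. apply lsum_ext; intro s2. unfold scaleA. ring.
Qed.

Lemma Dop_addr x0 a m n v : Dop x0 a (addA m n) v = Dop x0 a m v + Dop x0 a n v.
Proof.
  unfold Dop. rewrite <- lsum_plus. apply lsum_ext; intro s1.
  rewrite <- lsum_plus. apply lsum_ext; intro s2. unfold addA. ring.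
Qed.

Lemma Dop_scaler x0 r a m v : Dop x0 a (scaleA r m) v = r * Dop x0 a m v.
Proof.
  unfold Dop. rewrite <- lsum_scale. apply lsum_ext; intro s1.
  rewrite <- lsum_scale. apply lsum_ext; intro s2. unfold scaleA. ring.
Qed.

Lemma Dop_bracket x0 p q m v :
  Dop x0 (bracket p q) m v = Dop x0 p (bracket q m) v + -1 * Dop x0 q (bracket p m) v.
Proof.
  unfold bracket, subA.
  rewrite Dop_addl, Dop_scalel, !Dop_addr, !Dop_scaler, !Dop_mul_l. ring.
Qed.

Lemma sum_first (v : word) (F : word -> word -> R) :
  (forall s t, s <> [] -> F s t = 0) ->
  lsum (splits v) (fun st => F (fst st) (snd st)) = F [] v.
Proof.
  intros H. destruct v as [|c v]; simpl.
  - ring.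
  - rewrite lsum_map, lsum_zero; [ring|]. intros x; apply H; discriminate.
Qed.

Lemma sum_last (v : word) (F : word -> word -> R) :
  (forall s t, t <> [] -> F s t = 0) ->
  lsum (splits v) (fun st => F (fst st) (snd st)) = F v [].
Proof.
  revert F; induction v as [|c v IH]; intros F H; simpl.
  - ring.
  - rewrite lsum_map. rewrite H by discriminate.
    pose proof (IH (fun s t => F (c :: s) t)) as E. simpl in E.
    unfold word, letter in *. simpl. rewrite E; [ring|].
    intros; apply H; assumption.
Qed.

Lemma genA_zero l x0 (r p : word) : (r <> [] \/ p <> []) -> genA l (r ++ x0 :: p) = 0.
Proof.
  intros H. unfold genA. destruct (list_eq_dec Bool.bool_dec (r ++ x0 :: p) [l]) as [e|]; [|reflexivity].
  exfalso. destruct r as [|c r]; simpl in e.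
  - injection e; intros; subst; destruct H; auto.
  - injection e; intros e' _. symmetry in e'. apply app_cons_not_nil in e'. exact e'.
Qed.

Lemma Dop_gen x0 l m v : Dop x0 (genA l) m v = genA l [x0] * m v.
Proof.
  unfold Dop.
  rewrite (sum_first v (fun p u => lsum (splits u) (fun qr => genA l (snd qr ++ x0 :: p) * m (fst qr)))).
  - rewrite (sum_last v (fun q r => genA l (r ++ [x0]) * m q)).
    + reflexivity.
    + intros s t Ht. rewrite genA_zero by auto. ring.
  - intros s t Hs. apply lsum_zero. intros x. rewrite genA_zero by auto. ring.
Qed.

Lemma zero_inL : inL zeroA.
Proof.
  replace zeroA with (scaleA 0 (genA lx)).
  - apply L_scale, L_gen.
  - extensionality w. unfold scaleA, zeroA. ring.
Qed.

Lemma Dop_inL x0 a : inL a -> forall m, inL m -> inL (Dop x0 a m).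
Proof.
  induction 1 as [l|a b Ha IHa Hb IHb|r a Ha IHa|a b Ha IHa Hb IHb]; intros m Hm.
  - destruct (Bool.bool_dec l x0) as [e|ne].
    + replace (Dop x0 (genA l) m) with m; [exact Hm|].
      extensionality v. rewrite Dop_gen. subst. unfold genA.
      destruct (list_eq_dec Bool.bool_dec [x0] [x0]) as [_|n]; [ring| now exfalso].
    + replace (Dop x0 (genA l) m) with zeroA; [exact zero_inL|].
      extensionality v. rewrite Dop_gen. unfold genA, zeroA.
      destruct (list_eq_dec Bool.bool_dec [x0] [l]) as [e|_]; [|ring].
      injection e; intros; subst; now exfalso.
  - replace (Dop x0 (addA a b) m) with (addA (Dop x0 a m) (Dop x0 b m)).
    + apply L_add; auto.
    + extensionality v. rewrite Dop_addl. reflexivity.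
  - replace (Dop x0 (scaleA r a) m) with (scaleA r (Dop x0 a m)).
    + apply L_scale; auto.
    + extensionality v. rewrite Dop_scalel. reflexivity.
  - replace (Dop x0 (bracket a b) m) with
      (addA (Dop x0 a (bracket b m)) (scaleA (-1) (Dop x0 b (bracket a m)))).
    + apply L_add; [apply IHa | apply L_scale, IHb]; apply L_bracket; auto.
    + extensionality v. rewrite Dop_bracket. reflexivity.
Qed.

Lemma cycder_add x0 a b v : cycder x0 (addA a b) v = cycder x0 a v + cycder x0 b v.
Proof. rewrite !cycder_splits, <- lsum_plus. reflexivity. Qed.

Lemma cycder_scale x0 r a v : cycder x0 (scaleA r a) v = r * cycder x0 a v.
Proof. rewrite !cycder_splits, <- lsum_scale. reflexivity. Qed.

Lemma cycder_comm x0 c : inComm c -> forall v, cycder x0 c v = 0.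
Proof.
  induction 1 as [a b _ _|a b _ IHa _ IHb|r a _ IHa]; intros v.
  - unfold bracket, subA. rewrite cycder_add, cycder_scale, !cycder_mul. ring.
  - rewrite cycder_add, IHa, IHb. ring.
  - rewrite cycder_scale, IHa. ring.
Qed.

Lemma cycder_LL x0 h : inLL h -> inL (cycder x0 h).
Proof.
  induction 1 as [a b Ha Hb|a b _ IHa _ IHb|r a _ IHa].
  - replace (cycder x0 (mulA a b)) with (addA (Dop x0 a b) (Dop x0 b a)).
    + apply L_add; apply Dop_inL; auto.
    + extensionality v. rewrite cycder_mul. reflexivity.
  - replace (cycder x0 (addA a b)) with (addA (cycder x0 a) (cycder x0 b)).
    + apply L_add; auto.
    + extensionality v. rewrite cycder_add. reflexivity.
  - replace (cycder x0 (scaleA r a)) with (scaleA r (cycder x0 a)).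
    + apply L_scale; auto.
    + extensionality v. rewrite cycder_scale. reflexivity.
Qed.

Theorem mainTheorem5 :
  forall (x0 : letter) (g : A),
    isPoly g -> trInFL g -> inL (cycder x0 g).
Proof.
  intros x0 g _ [h [Hh Hc]].
  replace (cycder x0 g) with (cycder x0 h).
  - apply cycder_LL; exact Hh.
  - extensionality v. pose proof (cycder_comm x0 _ Hc v) as E.
    unfold subA in E. rewrite cycder_add, cycder_scale in E. lra.
Qed.
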